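(* Let $A=\{a_1,\dots,a_k\}$ be finite and $u_1,u_2:A\to\mathbb{R}$. In every subgame-perfect Nash equilibrium $\sigma=(\sigma_1,\sigma_2)$ of the two-player Price \& Choose game, player 1's price vector is $\sigma_1=p^*$, where $p^*_j=u_2(a_j)-\mathrm{Avg}_2$ for all $j$ (the unique price vector in $P$ making player 2 indifferent among all options).
   Context: Two players with quasi-linear utilities: if option $a\in A$ is selected and player $i$ receives transfer $t_i$, player $i$'s utility is $u_i(a)+t_i$. Let $P=\{p\in\mathbb{R}^k:\sum_{j=1}^k p_j=0\}$ and $\mathrm{Avg}_2=\frac1k\sum_{j}u_2(a_j)$. The Price \& Choose game: player 1 chooses $p\in P$; then player 2, having observed $p$, chooses $a_j\in A$ and pays $p_j$ to player 1; payoffs $g_1(p,a_j)=u_1(a_j)+p_j$, $g_2(p,a_j)=u_2(a_j)-p_j$. A pure strategy profile $\sigma=(\sigma_1,\sigma_2)$, $\sigma_1\in P$, $\sigma_2:P\to A$, is a subgame-perfect Nash equilibrium if $\sigma_2(p)\in\arg\max_{a}g_2(p,a)$ for every $p\in P$ and $g_1(\sigma_1,\sigma_2(\sigma_1))\ge g_1(p,\sigma_2(p))$ for all $p\in P$. *)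

(* Defs.v *)
From mathcomp Require Import all_boot all_order all_algebra.
Set Implicit Arguments. Unset Strict Implicit. Unset Printing Implicit Defensive.
Import Order.TTheory GRing.Theory Num.Theory.
Local Open Scope ring_scope.

Definition in_P (R : realFieldType) (k : nat) (p : 'I_k -> R) : Prop :=
  \sum_(j < k) p j = 0.

Definition priceP (R : realFieldType) (k : nat) := {p : 'I_k -> R | in_P p}.

Definition g1 (R : realFieldType) (k : nat) (u1 : 'I_k -> R)
  (p : 'I_k -> R) (j : 'I_k) : R := u1 j + p j.
Definition g2 (R : realFieldType) (k : nat) (u2 : 'I_k -> R)
  (p : 'I_k -> R) (j : 'I_k) : R := u2 j - p j.

Definition is_SPNE (R : realFieldType) (k : nat) (u1 u2 : 'I_k -> R)
  (s1 : priceP R k) (s2 : priceP R k -> 'I_k) : Prop :=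
  (forall (p : priceP R k) (j : 'I_k), g2 u2 (proj1_sig p) j <= g2 u2 (proj1_sig p) (s2 p))
  /\ (forall p : priceP R k, g1 u1 (proj1_sig p) (s2 p) <= g1 u1 (proj1_sig s1) (s2 s1)).

Definition avg2 (R : realFieldType) (k : nat) (u2 : 'I_k -> R) : R :=
  (k%:R)^-1 * \sum_(j < k) u2 j.

(* Main.v *)
Require Import Defs.
From mathcomp Require Import all_boot all_order all_algebra.
From mathcomp Require Import ring lra.
Import Order.TTheory GRing.Theory Num.Theory.
Local Open Scope ring_scope.

Theorem mainTheorem3 (R : realFieldType) (k : nat) (u1 u2 : 'I_k -> R)
  (s1 : priceP R k) (s2 : priceP R k -> 'I_k) :
  is_SPNE u1 u2 s1 s2 ->
  forall j : 'I_k, proj1_sig s1 j = u2 j - avg2 u2.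
Proof.
move=> [H1 H2] j.
case: k u1 u2 s1 s2 H1 H2 j => [|n] u1 u2 s1 s2 H1 H2 j; first by case: j.
set A := avg2 u2.
have kA : n.+1%:R * A = \sum_(i < n.+1) u2 i.
  by rewrite /A /avg2 mulrA mulfV ?mul1r // pnatr_eq0.
have kpos : 0 < n.+1%:R :> R by rewrite ltr0n.
case: s1 H1 H2 => p Pp /= H1 H2.
set a := s2 (exist _ p Pp) in H1 H2.
have Ha : forall i, u2 i - p i <= u2 a - p a by move=> i; have := H1 (exist _ p Pp) i; rewrite /g2.
clearbody a.
have Sc : \sum_(i < n.+1) (u2 i - p i) = n.+1%:R * A.
  by rewrite sumrB; move: (Pp); rewrite /in_P => ->; rewrite subr0 kA.
have Hca : u2 a - p a <= A.
  rewrite leNgt; apply/negP => Hlt.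
  set d := u2 a - p a - A.
  have dpos : 0 < d by rewrite /d subr_gt0.
  set e := d / n.+1%:R.
  have epos : 0 < e by rewrite /e divr_gt0.
  have ke : n.+1%:R * e = d by rewrite /e mulrC -mulrA mulVf ?mulr1 // pnatr_eq0.
  pose p' := fun i : 'I_n.+1 => u2 i - A + e - (i == a)%:R * d.
  have Pp' : in_P p'.
    rewrite /in_P /p' sumrB big_split sumrB !sumr_const card_ord -kA.
    rewrite -[A *+ _]mulr_natl -[e *+ _]mulr_natl ke subrr.
    rewrite (bigD1 a) //= eqxx mul1r big1 ?addr0; last first.
      by move=> i /negPf ->; rewrite mul0r.
    by rewrite /= add0r subrr.
  set q := exist _ p' Pp'.
  have Hb : s2 q = a.
    apply/eqP; apply/negPn/negP => Hne.
    have := H1 q a; rewrite /g2 /= /p' eqxx (negPf Hne) mul1r mul0r subr0.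
    lra.
  have := H2 q; rewrite /g1 Hb /= /p' eqxx mul1r.
  rewrite /d; lra.
have Hall : forall i, u2 i - p i <= A.
  by move=> i; apply: le_trans (Ha i) Hca.
have Z : \sum_(i < n.+1) (A - (u2 i - p i)) = 0.
  by rewrite sumrB Sc sumr_const card_ord -[A *+ _]mulr_natl subrr.
have := psumr_eq0P (P := predT) (F := fun i => A - (u2 i - p i)) (fun i _ => (eq_ind_r is_true (Hall i) (subr_ge0 _ _))) Z.
move=> /(_ j isT) /eqP; rewrite subr_eq0 => /eqP ->; ring.
Qed.
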